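(* Let $\lambda$ be Lebesgue measure on $[0,1]$ and let $T:[0,1]\to[0,1]$ be an invertible, ergodic, $\lambda$-preserving transformation which is rigid rank 1, with associated numbers $n_k$ and sets $A_k$ (as in the context). Let $\mathcal{R}_k=\bigcup_{i=0}^{n_k-1}T^iA_k$ and $$\tilde{\mathcal{R}}_k=\bigcup_{i=0}^{n_k-1}T^i\big(A_k\cap T^{-n_k}A_k\cap T^{-2n_k}A_k\cap T^{n_k}A_k\cap T^{2n_k}A_k\big).$$ Let $\sigma$ be a self-joining of $([0,1],T,\lambda)$ with disintegration $(\sigma_x)_{x\in[0,1]}$ over the first coordinate, chosen so that $\sigma_{Tx}(TE)=\sigma_x(E)$ for every $x\in[0,1]$ and every Borel $E\subset[0,1]$. For $0\le \ell<n_k$, $x\in T^\ell A_k$ and $0\le i<n_k$, let $a_i\in\{0,\dots,n_k-1\}$ be the integer with $a_i\equiv i+\ell \pmod{n_k}$ and set $c_i(x)=\sigma_x(T^{a_i}A_k\cap\mathcal{R}_k)$. Then for every $0\le\ell<n_k$, every $x\in T^\ell A_k$ and every integer $i$ with $-\ell\le i<n_k-\ell$, $$\sum_{j=0}^{n_k-1}|c_j(x)-c_j(T^ix)|\le 2\sigma_x(\tilde{\mathcal{R}}_k^c).$$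
   Context: $T$ is called rigid rank 1 if there exist positive integers $n_j$ and measurable sets $A_j\subset[0,1]$ such that: (1) $\lim_{j\to\infty}\lambda\big(\bigcup_{i=0}^{n_j-1}T^iA_j\big)=1$; (2) the sets $A_j,TA_j,\dots,T^{n_j-1}A_j$ are pairwise disjoint; (3) $\lim_{j\to\infty}\lambda(T^{n_j}A_j\cap A_j)/\lambda(A_j)=1$; (4) for every $\varepsilon>0$ there exist, for each $j$, metric balls $B^{(j)}_0,\dots,B^{(j)}_{n_j-1}\subset[0,1]$ of diameter at most $\varepsilon$ such that $\lim_{j\to\infty}\sum_{i=0}^{n_j-1}\lambda(T^iA_j\setminus B^{(j)}_i)=0$. A self-joining of $([0,1],T,\lambda)$ is a $T\times T$-invariant Borel probability measure on $[0,1]\times[0,1]$ both of whose marginals equal $\lambda$; $\sigma_x$ is regarded as a probability measure on $[0,1]$. By disjointness of the levels $T^\ell A_k$, the index $\ell$ with $x\in T^\ell A_k$ is unique, so $c_i(x)$ is well defined (and $T^ix\in T^{\ell+i}A_k$ for $-\ell\le i<n_k-\ell$, so $c_j(T^ix)$ is defined with $\ell+i$ in place of $\ell$). *)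

(* Defs.v *)
From mathcomp Require Import all_boot all_order all_algebra.
From mathcomp Require Import all_classical all_reals all_analysis measurable_realfun.
Set Implicit Arguments. Unset Strict Implicit. Unset Printing Implicit Defensive.
Import Order.TTheory GRing.Theory Num.Theory numFieldNormedType.Exports.
Local Open Scope classical_set_scope.
Local Open Scope ring_scope.

Section Defs.
Variable R : realType.

Definition I01 : set R := `[0%R, 1%R].

Local Notation lam := (@lebesgue_measure R).

(* Integer powers T^i of an invertible map T with inverse Tinv:
   T^m for i = m >= 0 and Tinv^(m+1) for i = -(m+1). *)
Definition Tpow (T Tinv : R -> R) (i : int) : R -> R :=
  match i with
  | Posz m => iter m T
  | Negz m => iter m.+1 Tinv
  end.

Definition invertible01 (T Tinv : R -> R) : Prop :=
  [/\ forall x, I01 x -> I01 (T x) /\ I01 (Tinv x),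
      forall x, I01 x -> Tinv (T x) = x /\ T (Tinv x) = x,
      measurable_fun I01 T & measurable_fun I01 Tinv].

Definition lam_preserving (T : R -> R) : Prop :=
  forall E : set R, measurable E -> E `<=` I01 ->
    lam (I01 `&` T @^-1` E) = lam E.

Definition ergodic01 (T : R -> R) : Prop :=
  forall E : set R, measurable E -> E `<=` I01 ->
    I01 `&` T @^-1` E = E -> lam E = 0%E \/ lam E = 1%E.

Definition small_ball01 (eps : R) (B : set R) : Prop :=
  (exists c r : R, [/\ I01 c, 0 < r & B = ball c r `&` I01]) /\
  (forall y z, B y -> B z -> `|y - z| <= eps).

Definition tower (T Tinv : R -> R) (n : nat) (A : set R) : set R :=
  \bigcup_(i in `I_n) (Tpow T Tinv i%:Z @` A).

Definition rigid_rank1 (T Tinv : R -> R) (n : nat -> nat) (A : nat -> set R)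
  : Prop :=
  [/\ forall j, (0 < n j)%N /\ measurable (A j) /\ A j `<=` I01,
      (fun j => lam (tower T Tinv (n j) (A j))) @ \oo --> 1%E,
      (forall j i i', (i < n j)%N -> (i' < n j)%N -> i <> i' ->
         (Tpow T Tinv i%:Z @` A j) `&` (Tpow T Tinv i'%:Z @` A j) = set0),
      (fun j => fine (lam ((Tpow T Tinv (n j)%:Z @` A j) `&` A j))
                / fine (lam (A j))) @ \oo --> (1 : R) &
      (forall eps : R, 0 < eps -> exists B : nat -> nat -> set R,
         (forall j i, (i < n j)%N -> small_ball01 eps (B j i)) /\
         (fun j => (\sum_(0 <= i < n j)
                      lam ((Tpow T Tinv i%:Z @` A j) `\` B j i))%E)
           @ \oo --> 0%E)].

Definition self_joining (T : R -> R) (sigma : probability (R * R)%type R)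
  : Prop :=
  [/\ sigma (I01 `*` I01) = 1%E,
      forall E : set R, measurable E -> sigma (E `*` setT) = lam (E `&` I01),
      forall E : set R, measurable E -> sigma (setT `*` E) = lam (E `&` I01) &
      forall F : set (R * R), measurable F ->
        sigma ((fun p => (T p.1, T p.2)) @^-1` F) = sigma F].

Definition disintegration (sigma : probability (R * R)%type R)
  (sx : R -> probability R R) : Prop :=
  [/\ forall x, I01 x -> sx x I01 = 1%E,
      forall F : set R, measurable F -> measurable_fun I01 ((fun x => sx x F) : R -> \bar R) &
      forall E F : set R, measurable E -> measurable F ->
        sigma (E `*` F) = (\int[lam]_(x in E `&` I01) sx x F)%E].

Definition equivariant (T : R -> R) (sx : R -> probability R R) : Prop :=
  forall x, I01 x -> forall E : set R, measurable E -> E `<=` I01 ->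
    sx (T x) (T @` E) = sx x E.

Definition good_set (T Tinv : R -> R) (n : nat) (A : set R) : set R :=
  let m := n%:Z in
  tower T Tinv n
    (A `&` (Tpow T Tinv (- m) @` A) `&` (Tpow T Tinv (- (2 * m)) @` A)
       `&` (Tpow T Tinv m @` A) `&` (Tpow T Tinv (2 * m) @` A)).

Definition cfun (T Tinv : R -> R) (n : nat) (A : set R)
  (sx : R -> probability R R) (l i : nat) (x : R) : \bar R :=
  sx x ((Tpow T Tinv ((i + l) %% n)%N%:Z @` A) `&` tower T Tinv n A).

End Defs.
Arguments I01 {R}.

(* Main.v *)
Require Import Defs.
From mathcomp Require Import all_boot all_order all_algebra.
From mathcomp Require Import all_classical all_reals all_analysis measurable_realfun.
From mathcomp Require Import zify lra.
Import Order.TTheory GRing.Theory Num.Theory.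
Local Open Scope classical_set_scope.
Local Open Scope ring_scope.

Lemma iter_I01 {R : realType} (f : R -> R) m z :
  (forall x, I01 x -> I01 (f x)) -> I01 z -> I01 (iter m f z).
Proof. by move=> hf hz; elim: m => //= m IH; apply: hf. Qed.

Lemma Tpow_I01 {R : realType} (T Tinv : R -> R) i z :
  invertible01 T Tinv -> I01 z -> I01 (Tpow T Tinv i z).
Proof.
case=> h1 _ _ _ hz; case: i => m /=.
- by apply: (@iter_I01 _ T) => // x /h1 [].
- by apply: (@iter_I01 _ Tinv m.+1) => // x /h1 [].
Qed.

Lemma TpowS {R : realType} (T Tinv : R -> R) b z :
  invertible01 T Tinv -> I01 z -> Tpow T Tinv (b + 1) z = T (Tpow T Tinv b z).
Proof.
move=> hT hz; have [h1 h2 _ _] := hT.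
case: b => [m|[|m]].
- by have -> : (Posz m + 1 = Posz m.+1)%R by lia.
- by rewrite /= (h2 _ hz).2.
- have -> : (Negz m.+1 + 1 = Negz m)%R by rewrite !NegzE; lia.
  rewrite [in RHS]/Tpow iterS (h2 _ _).2 //.
  by have := @Tpow_I01 _ _ _ (Negz m) _ hT hz.
Qed.

Lemma TpowP {R : realType} (T Tinv : R -> R) b z :
  invertible01 T Tinv -> I01 z -> Tpow T Tinv (b - 1) z = Tinv (Tpow T Tinv b z).
Proof.
move=> hT hz; have [h1 h2 _ _] := hT.
case: b => [[|m]|m].
- by [].
- have -> : (Posz m.+1 - 1 = Posz m)%R by lia.
  rewrite [in RHS]/Tpow iterS (h2 _ _).1 //.
  by have := @Tpow_I01 _ _ _ (Posz m) _ hT hz.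
- have -> : (Negz m - 1 = Negz m.+1)%R by rewrite !NegzE; lia.
  by [].
Qed.

Lemma Tpow_add {R : realType} (T Tinv : R -> R) a b z :
  invertible01 T Tinv -> I01 z ->
  Tpow T Tinv a (Tpow T Tinv b z) = Tpow T Tinv (a + b) z.
Proof.
move=> hT hz; have hb := @Tpow_I01 _ _ _ b _ hT hz.
elim/int_rec: a => [|m IH|m IH].
- by rewrite add0r.
- have -> : (Posz m.+1 = Posz m + 1)%R by lia.
  rewrite TpowS // IH -TpowS //; congr Tpow; lia.
- have -> : (- Posz m.+1 = - Posz m - 1)%R by lia.
  rewrite TpowP // IH -TpowP //; congr Tpow; lia.
Qed.

Lemma Tpow0 {R : realType} (T Tinv : R -> R) z : Tpow T Tinv 0 z = z.
Proof. by []. Qed.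

Lemma TpowK {R : realType} (T Tinv : R -> R) i z :
  invertible01 T Tinv -> I01 z -> Tpow T Tinv i (Tpow T Tinv (- i) z) = z.
Proof. by move=> hT hz; rewrite Tpow_add // addrN. Qed.

Lemma I01_meas {R : realType} : measurable (@I01 R).
Proof. exact: measurable_itv. Qed.

Lemma img_pre {R : realType} {f g : R -> R} {E : set R} :
  (forall x, I01 x -> I01 (f x) /\ I01 (g x)) ->
  (forall x, I01 x -> g (f x) = x /\ f (g x) = x) ->
  E `<=` I01 -> f @` E = I01 `&` g @^-1` E.
Proof.
move=> h1 h2 sE; apply/seteqP; split=> z.
- case=> e Ee <-; have Ie := sE _ Ee; split; first by case: (h1 _ Ie).
  by rewrite /preimage /= (h2 _ Ie).1.
- case=> Iz Egz; exists (g z) => //; by rewrite (h2 _ Iz).2.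
Qed.

Definition good_map {R : realType} (f : R -> R) :=
  (forall x, I01 x -> I01 (f x)) /\
  (forall E : set R, measurable E -> E `<=` I01 -> measurable (f @` E) /\ f @` E `<=` I01).

Lemma good_T {R : realType} (T Tinv : R -> R) :
  invertible01 T Tinv -> good_map T /\ good_map Tinv.
Proof.
move=> [h1 h2 mT mTi]; split; split.
- by move=> x /h1 [].
- move=> E mE sE; rewrite (img_pre h1 h2 sE); split; last by move=> z [].
  by apply: mTi => //; exact: I01_meas.
- by move=> x /h1 [].
- have h1' : forall x, I01 x -> I01 (Tinv x) /\ I01 (T x).
    by move=> x /h1 [].
  have h2' : forall x, I01 x -> T (Tinv x) = x /\ Tinv (T x) = x.
    by move=> x /h2 [].
  move=> E mE sE; rewrite (img_pre h1' h2' sE); split; last by move=> z [].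
  by apply: mT => //; exact: I01_meas.
Qed.

Lemma good_iter {R : realType} (f : R -> R) m : good_map f -> good_map (iter m f).
Proof.
move=> [hf1 hf2]; elim: m => [|m [IH1 IH2]].
  split => // E mE sE; rewrite image_id; done.
split; first by move=> x /IH1 /hf1.
move=> E mE sE; have -> : iter m.+1 f @` E = f @` (iter m f @` E).
  by rewrite image_comp.
have [m1 s1] := IH2 E mE sE; exact: hf2.
Qed.

Lemma good_Tpow {R : realType} (T Tinv : R -> R) i :
  invertible01 T Tinv -> good_map (Tpow T Tinv i).
Proof. move=> /good_T [g1 g2]; case: i => m /=; exact: good_iter. Qed.

Lemma img_Tpow_mem {R : realType} (T Tinv : R -> R) i (D : set R) z :
  invertible01 T Tinv -> D `<=` I01 -> I01 z ->
  (Tpow T Tinv (- i) @` D) z <-> D (Tpow T Tinv i z).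
Proof.
move=> hT sD Iz; split.
- by case=> d Dd <-; rewrite TpowK //; apply: sD.
- move=> Dz; exists (Tpow T Tinv i z) => //.
  by rewrite Tpow_add // addNr.
Qed.

Lemma img_TpowK {R : realType} (T Tinv : R -> R) i (D : set R) :
  invertible01 T Tinv -> D `<=` I01 ->
  Tpow T Tinv i @` (Tpow T Tinv (- i) @` D) = D.
Proof.
move=> hT sD; rewrite image_comp; apply/seteqP; split=> z.
- by case=> d Dd <- /=; rewrite TpowK //; apply: sD.
- by move=> Dz; exists z => //=; rewrite TpowK //; apply: sD.
Qed.

Lemma equiv_iter {R : realType} (f : R -> R) (sx : R -> probability R R) m :
  good_map f ->
  (forall x, I01 x -> forall E : set R, measurable E -> E `<=` I01 ->
    sx (f x) (f @` E) = sx x E) ->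
  forall x, I01 x -> forall E : set R, measurable E -> E `<=` I01 ->
    sx (iter m f x) (iter m f @` E) = sx x E.
Proof.
move=> hg he; elim: m => [|m IH] x Ix E mE sE; first by rewrite /= image_id.
have [g1 g2] := @good_iter _ f m hg.
have -> : iter m.+1 f @` E = f @` (iter m f @` E) by rewrite image_comp.
have [m1 s1] := g2 E mE sE.
by rewrite /= he //; [apply: IH | apply: g1].
Qed.

Lemma equiv_Tpow {R : realType} (T Tinv : R -> R) (sx : R -> probability R R) i :
  invertible01 T Tinv -> equivariant T sx ->
  forall x, I01 x -> forall E : set R, measurable E -> E `<=` I01 ->
    sx (Tpow T Tinv i x) (Tpow T Tinv i @` E) = sx x E.
Proof.
move=> hT he; have [g1 g2] := good_T _ _ hT.
case: i => m /=; apply: equiv_iter => //.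
move=> x Ix E mE sE.
have [h1 h2 _ _] := hT.
have [m1 s1] := g2.2 E mE sE.
rewrite -(he (Tinv x)) //; last by case: (h1 _ Ix).
rewrite (h2 _ Ix).2 image_comp; congr (sx x _).
apply/seteqP; split=> z.
- by case=> e Ee <- /=; rewrite (h2 _ (sE _ Ee)).2.
- by move=> Ez; exists z => //=; rewrite (h2 _ (sE _ Ez)).2.
Qed.

Lemma I01_meas' {R : realType} : measurable (@I01 R).
Proof. exact: measurable_itv. Qed.

Lemma sumD_le {R : realType} (mu : probability R R) (N : nat) (S : nat -> set R) (G : set R) :
  measurable G ->
  (forall j, (j < N)%N -> measurable (S j) /\ S j `<=` I01) ->
  (forall j j', (j < N)%N -> (j' < N)%N -> j <> j' -> S j `&` S j' = set0) ->
  (\sum_(0 <= j < N) mu (S j `\` G) <= mu (I01 `\` G))%E.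
Proof.
move=> mG hS dS.
pose F k := if (k < N)%N then S k `\` G else set0.
have mF : forall k, measurable (F k).
  move=> k; rewrite /F; case: ifP => kN; last exact: measurable0.
  by apply: measurableD => //; case: (hS k kN).
have tF : trivIset setT F.
  move=> i j _ _; rewrite /F; case: ifP => iN; case: ifP => jN;
    rewrite ?set0I ?setI0; try by case.
  move=> ne; have [//|/eqP ij] := eqVneq i j; move: ne.
  suff -> : (S i `\` G) `&` (S j `\` G) = set0 by case.
  apply/seteqP; split => // z [[Si _] [Sj _]].
  by rewrite -(dS i j iN jN ij); split.
rewrite big_mkord.
have -> : (\sum_(j < N) mu (S j `\` G) = \sum_(j < N) mu (F j))%E.
  by apply: eq_bigr => j _; rewrite /F ltn_ord.
rewrite -measure_semi_additive //; last exact: bigsetU_measurable.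
apply: le_measure; rewrite ?inE.
- exact: bigsetU_measurable.
- by apply: measurableD => //; exact: I01_meas'.
move=> z; rewrite -bigcup_mkord => -[j _]; rewrite /F; case: ifP => jN; last by [].
by case=> Sz Gz; split => //; case: (hS j jN) => _; apply.
Qed.

Lemma pt_le {R : realType} (mu : probability R R) (B C G : set R) :
  measurable B -> measurable C -> measurable G -> B `&` G = C `&` G ->
  (`|mu B - mu C| <= mu (B `\` G) + mu (C `\` G))%E.
Proof.
move=> mB mC mG hBC.
rewrite (measureDI mu mB mG) (measureDI mu mC mG) hBC.
have f1 := fin_num_measure mu (B `\` G) (measurableD mB mG).
have f2 := fin_num_measure mu (C `\` G) (measurableD mC mG).
have f3 := fin_num_measure mu (C `&` G) (measurableI _ _ mC mG).
have g1 : (0 <= fine (mu (B `\` G)))%R by apply: fine_ge0.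
have g2 : (0 <= fine (mu (C `\` G)))%R by apply: fine_ge0.
rewrite -(fineK f1) -(fineK f2) -(fineK f3) -!EFinD abse_EFin.
rewrite -[X in (_ <= X)%E](@fineK _ (mu (B `\` G) + mu (C `\` G))%E ltac:(by rewrite fin_numD f1 f2)) lee_fin fineD //.
rewrite ler_norml; apply/andP; split; lra.
Qed.

Lemma key_ineq {R : realType} (mu : probability R R) (N : nat) (B C : nat -> set R) (G : set R) :
  measurable G ->
  (forall j, (j < N)%N -> [/\ measurable (B j), measurable (C j), B j `<=` I01 & C j `<=` I01]) ->
  (forall j j', (j < N)%N -> (j' < N)%N -> j <> j' -> B j `&` B j' = set0) ->
  (forall j j', (j < N)%N -> (j' < N)%N -> j <> j' -> C j `&` C j' = set0) ->
  (forall j, (j < N)%N -> B j `&` G = C j `&` G) ->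
  (\sum_(0 <= j < N) `|mu (B j) - mu (C j)| <= 2%:E * mu (I01 `\` G))%E.
Proof.
move=> mG hBC dB dC eBC.
apply: (@le_trans _ _ (\sum_(0 <= j < N) (mu (B j `\` G) + mu (C j `\` G)))%E).
  rewrite big_nat_cond [X in (_ <= X)%E]big_nat_cond.
  apply: lee_sum => j /andP[/andP[_ jN] _].
  by case: (hBC j jN) => mB mC _ _; apply: pt_le => //; apply: eBC.
rewrite big_split /=.
have f := fin_num_measure mu (I01 `\` G) (measurableD I01_meas' mG).
have -> : (2%:E * mu (I01 `\` G) = mu (I01 `\` G) + mu (I01 `\` G))%E.
  by rewrite -(fineK f) -EFinM -EFinD; congr EFin; lra.
apply: leeD; apply: sumD_le => // j jN; by case: (hBC j jN).
Qed.

Lemma modarith (N j l L m q : nat) : (m < N)%N -> (q < N)%N ->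
  [\/ q + l = m + L, q + l + N = m + L | q + l = m + L + N]%N ->
  ((j + l) %% N = m <-> (j + L) %% N = q)%N.
Proof.
move=> mN qN h.
have e5 : (m + L = q + l %[mod N])%N.
  by case: h => [->|<-|->]; rewrite ?modnDr.
split=> H.
- rewrite -(modn_small qN); apply/eqP; rewrite -(eqn_modDr l) -addnA (addnC L) addnA.
  by rewrite -modnDml H e5.
- rewrite -(modn_small mN); apply/eqP; rewrite -(eqn_modDr L) addnAC.
  by rewrite -modnDml H e5.
Qed.

Theorem mainTheorem4 (R : realType) (T Tinv : R -> R)
  (n : nat -> nat) (A : nat -> set R)
  (sigma : probability (R * R)%type R) (sx : R -> probability R R) :
  invertible01 T Tinv -> lam_preserving T -> ergodic01 T ->
  rigid_rank1 T Tinv n A ->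
  self_joining T sigma -> disintegration sigma sx -> equivariant T sx ->
  forall (k l : nat), (l < n k)%N ->
  forall x : R, (Tpow T Tinv l%:Z @` A k) x ->
  forall i : int, - (l%:Z) <= i -> i < (n k)%:Z - l%:Z ->
  (\sum_(0 <= j < n k)
     `| cfun T Tinv (n k) (A k) sx l j x
        - cfun T Tinv (n k) (A k) sx (absz (l%:Z + i)%R) j (Tpow T Tinv i x) |
   <= 2%:E * sx x (I01 `\` good_set T Tinv (n k) (A k)))%E.
Proof.
move=> hT _ _ hR _ _ he k l lN x hx i hi1 hi2.
have [hA _ hdisj _ _] := hR.
have [N0 [mA sA]] := hA k.
have dlev := hdisj k.
move: N0 lN hi2 dlev; set N := n k => N0 lN hi2 dlev.
move: mA sA hx dlev; set Ak := A k => mA sA hx dlev.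
set lev := fun p : nat => Tpow T Tinv p%:Z @` Ak.
have mlev : forall p : int, measurable (Tpow T Tinv p @` Ak) /\ Tpow T Tinv p @` Ak `<=` I01.
  by move=> p; apply: (@good_Tpow _ T Tinv p hT).2.
have uniq : forall p p' z, (p < N)%N -> (p' < N)%N -> lev p z -> lev p' z -> p = p'.
  move=> p p' z pN p'N h1 h2; have [//|/eqP ne] := eqVneq p p'.
  have : (lev p `&` lev p') z by split.
  by rewrite /lev dlev.
set Rk := tower T Tinv N Ak.
have mRk : measurable Rk.
  by rewrite /Rk /tower; apply: bigcup_measurable => p _; exact: (mlev p).1.
have sRk : Rk `<=` I01 by move=> z [p _ hz]; exact: (mlev p).2 _ hz.
have levR : forall p, (p < N)%N -> lev p `<=` Rk by move=> p pN z lz; exists p.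
have Ix : I01 x by exact: (mlev l).2 _ hx.
set L := absz (l%:Z + i)%R.
have hL : L%:Z = l%:Z + i by rewrite /L; lia.
pose B j := lev ((j + l) %% N)%N `&` Rk.
pose D j := lev ((j + L) %% N)%N `&` Rk.
pose C j := Tpow T Tinv (- i) @` D j.
have sD : forall j, D j `<=` I01 by move=> j z [_ /sRk].
have mD : forall j, measurable (D j).
  by move=> j; apply: measurableI => //; exact: (mlev _).1.
have mC : forall j, measurable (C j) /\ C j `<=` I01.
  by move=> j; apply: (@good_Tpow _ T Tinv (- i) hT).2.
have -> : (\sum_(0 <= j < N)
     `| cfun T Tinv N Ak sx l j x - cfun T Tinv N Ak sx L j (Tpow T Tinv i x) |
    = \sum_(0 <= j < N) `| sx x (B j) - sx x (C j) |)%E.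
  apply: eq_bigr => j _; rewrite /cfun; congr (`|_ - _|%E).
  change (sx (Tpow T Tinv i x) (D j) = sx x (C j)).
  rewrite -[in LHS](@img_TpowK _ T Tinv i (D j) hT (sD j)).
  by apply: equiv_Tpow => //; apply mC.
have Cmem : forall j z, I01 z -> C j z <-> D j (Tpow T Tinv i z).
  by move=> j z Iz; apply: (@img_Tpow_mem _ T Tinv i (D j) z hT (sD j) Iz).
set G := good_set T Tinv N Ak.
have mG : measurable G.
  rewrite /G /good_set /tower; apply: bigcup_measurable => p _.
  apply: (proj1 ((@good_Tpow _ T Tinv p hT).2 _ _ _)).
    by repeat apply: measurableI => //; apply: (mlev _).1.
  by move=> z [[[[Az _] _] _] _]; apply: sA.
have sG : G `<=` I01.
  move=> z [p _ [w [[[[Aw _] _] _] _] <-]]; apply: Tpow_I01 => //; exact: sA.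
have keyG : forall j, (j < N)%N -> forall z, G z -> (B j z <-> C j z).
  move=> j jN z Gz; have Iz := sG z Gz.
  case: Gz => m mN [w [[[[Aw [a1 Aa1 e1]] _] [a3 Aa3 e3]] _] ez].
  have Iw : I01 w by apply: sA.
  have {}mN : (m < N)%N := mN.
  have hN1 : Ak (Tpow T Tinv N%:Z w).
    by rewrite -e1 Tpow_add ?addrN //; apply: sA.
  have hN2 : Ak (Tpow T Tinv (- N%:Z) w).
    by rewrite -e3 Tpow_add ?addNr //; apply: sA.
  have levm : lev m z by exists w.
  have [q [qN lq rel]] : exists q, [/\ (q < N)%N, lev q (Tpow T Tinv i z) &
      [\/ q + l = m + L, q + l + N = m + L | q + l = m + L + N]%N].
    rewrite -ez Tpow_add //.
    have : (0 <= i + m%:Z < N%:Z) \/ (N%:Z <= i + m%:Z) \/ (i + m%:Z < 0) by lia.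
    case=> [h|[h|h]].
    - exists (absz (i + m%:Z)%R); split; first by lia.
        by exists w => //; congr Tpow; lia.
      by constructor 1; lia.
    - exists (absz (i + m%:Z - N%:Z)%R); split; first by lia.
        by exists (Tpow T Tinv N%:Z w) => //; rewrite Tpow_add //; congr Tpow; lia.
      by constructor 2; lia.
    - exists (absz (i + m%:Z + N%:Z)%R); split; first by lia.
        by exists (Tpow T Tinv (- N%:Z) w) => //; rewrite Tpow_add //; congr Tpow; lia.
      by constructor 3; lia.
  have ar := @modarith N j l L m q mN qN rel.
  split.
  - case=> lz _; have e := uniq _ _ _ (ltn_pmod _ N0) mN lz levm.
    apply/(Cmem _ _ Iz); have e' := (ar.1 e).
    split; last by apply: (levR q qN).
    by rewrite e'.
  - move/(Cmem _ _ Iz) => [lz _].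
    have e := uniq _ _ _ (ltn_pmod _ N0) qN lz lq.
    have e' := ar.2 e.
    split; last by apply: (levR m mN).
    by rewrite e'.
apply: key_ineq => //.
- move=> j jN; split.
  + by apply: measurableI => //; exact: (mlev _).1.
  + exact: (mC j).1.
  + by move=> z [_ /sRk].
  + exact: (mC j).2.
- move=> j j' jN j'N ne; apply/seteqP; split => // z [[l1 _] [l2 _]].
  have := uniq _ _ z (ltn_pmod _ N0) (ltn_pmod _ N0) l1 l2.
  move/eqP; rewrite eqn_modDr !modn_small // => /eqP; done.
- move=> j j' jN j'N ne; apply/seteqP; split => // z [c1 c2].
  have Iz : I01 z by apply: (mC j).2.
  move: c1 c2 => /(Cmem _ _ Iz) [l1 _] /(Cmem _ _ Iz) [l2 _].
  have := uniq _ _ _ (ltn_pmod _ N0) (ltn_pmod _ N0) l1 l2.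
  move/eqP; rewrite eqn_modDr !modn_small // => /eqP; done.
- move=> j jN; apply/seteqP; split=> z [h Gz]; split => //; by apply/(keyG j jN z Gz).
Qed.
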